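(* Suppose $\Psi(t)=1-t$, and let $c\colon\mathcal{X}\times\mathcal{Y}\to[0,1]$ be any cost function. Let $\mathcal{H}_{\mathrm{all}}$ be the family of all measurable functions $\mathcal{X}\times\overline{\mathcal{Y}}\to\mathbb{R}$. Then for all $h\in\mathcal{H}_{\mathrm{all}}$ and any distribution on $\mathcal{X}\times\mathcal{Y}$, $$\mathcal{E}_{\mathsf{L}_{\mathrm{def}}}(h)-\mathcal{E}^*_{\mathsf{L}_{\mathrm{def}}}(\mathcal{H}_{\mathrm{all}})\le(n+1)\big(\mathcal{E}_{\mathsf{L}_{\mathrm{RL2D}}}(h)-\mathcal{E}^*_{\mathsf{L}_{\mathrm{RL2D}}}(\mathcal{H}_{\mathrm{all}})\big).$$ Furthermore, $\mathsf{L}_{\mathrm{RL2D}}$ is Bayes-consistent with respect to $\mathsf{L}_{\mathrm{def}}$: for any distribution and any sequence $(h_k)$ in $\mathcal{H}_{\mathrm{all}}$, $\mathcal{E}_{\mathsf{L}_{\mathrm{RL2D}}}(h_k)-\mathcal{E}^*_{\mathsf{L}_{\mathrm{RL2D}}}(\mathcal{H}_{\mathrm{all}})\to0$ implies $\mathcal{E}_{\mathsf{L}_{\mathrm{def}}}(h_k)-\mathcal{E}^*_{\mathsf{L}_{\mathrm{def}}}(\mathcal{H}_{\mathrm{all}})\to0$.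
   Context: Learning to defer. $\mathcal{X}$ is an input space, $\mathcal{Y}=[n]$, $\overline{\mathcal{Y}}=\{1,\dots,n+1\}$ with $n+1$ meaning ''defer''. For $h\colon\mathcal{X}\times\overline{\mathcal{Y}}\to\mathbb{R}$, $\mathsf{h}(x)=\operatorname{argmax}_{y\in\overline{\mathcal{Y}}}h(x,y)$ with a fixed deterministic tie-breaking rule. Given a cost $c\colon\mathcal{X}\times\mathcal{Y}\to[0,1]$, the deferral loss is $\mathsf{L}_{\mathrm{def}}(h,x,y)=1_{\mathsf{h}(x)\neq y}1_{\mathsf{h}(x)\in[n]}+c(x,y)1_{\mathsf{h}(x)=n+1}$, and for non-increasing $\Psi$ the surrogate is $\mathsf{L}_{\mathrm{RL2D}}(h,x,y)=c(x,y)\Psi\big(\frac{e^{h(x,y)}}{\sum_{y'\in\overline{\mathcal{Y}}}e^{h(x,y')}}\big)+(1-c(x,y))\Psi\big(\frac{e^{h(x,y)}+e^{h(x,n+1)}}{\sum_{y'\in\overline{\mathcal{Y}}}e^{h(x,y')}}\big)$. $\mathcal{E}_{\mathsf{L}}(h)=\mathbb{E}_{(x,y)}[\mathsf{L}(h,x,y)]$ and $\mathcal{E}^*_{\mathsf{L}}(\mathcal{H})=\inf_{h\in\mathcal{H}}\mathcal{E}_{\mathsf{L}}(h)$. *)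

(* Defs.v *)
From HB Require Import structures.
From mathcomp Require Import all_boot all_order all_algebra.
From mathcomp Require Import all_classical all_reals all_analysis.
Set Implicit Arguments. Unset Strict Implicit. Unset Printing Implicit Defensive.
Import Order.TTheory GRing.Theory Num.Theory.
Local Open Scope ring_scope.
Local Open Scope classical_set_scope.

HB.instance Definition _ (m : nat) := isPointed.Build 'I_m.+1 ord0.

HB.instance Definition _ (m : nat) := @isMeasurable.Build default_measure_display
  'I_m.+1 discrete_measurable discrete_measurable0
  discrete_measurableC discrete_measurableU.

Local Open Scope ereal_scope.

Section L2D.
Context {d : measure_display} {X : measurableType d} {R : realType} (n : nat).
(* Labels Y = [n+1] are 'I_n.+1, the augmented label set Ybar = 'I_n.+2,
   whose last element ord_max plays the role of "defer". *)

Definition lab (y : 'I_n.+1) : 'I_n.+2 := widen_ord (leqnSn n.+1) y.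
Definition defer : 'I_n.+2 := ord_max.

Definition hpred (h : X -> 'I_n.+2 -> R) (x : X) : 'I_n.+2 :=
  [arg max_(i > ord0) h x i]%O.

Definition L_def (c : X -> 'I_n.+1 -> R) (h : X -> 'I_n.+2 -> R)
    (x : X) (y : 'I_n.+1) : R :=
  ((hpred h x != lab y)%:R * (hpred h x != defer)%:R
   + c x y * (hpred h x == defer)%:R)%R.

Definition L_RL2D (Psi : R -> R) (c : X -> 'I_n.+1 -> R)
    (h : X -> 'I_n.+2 -> R) (x : X) (y : 'I_n.+1) : R :=
  let Z := (\sum_(j < n.+2) expR (h x j))%R in
  (c x y * Psi (expR (h x (lab y)) / Z)
   + (1 - c x y) * Psi ((expR (h x (lab y)) + expR (h x defer)) / Z))%R.

Definition H_all : set (X -> 'I_n.+2 -> R) :=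
  [set h | measurable_fun setT (fun z : X * 'I_n.+2 => h z.1 z.2)].

Definition risk (P : probability (X * 'I_n.+1)%type R)
    (L : (X -> 'I_n.+2 -> R) -> X -> 'I_n.+1 -> R)
    (h : X -> 'I_n.+2 -> R) : \bar R :=
  \int[P]_z (L h z.1 z.2)%:E.

Definition best_risk (P : probability (X * 'I_n.+1)%type R)
    (L : (X -> 'I_n.+2 -> R) -> X -> 'I_n.+1 -> R) : \bar R :=
  ereal_inf [set risk P L h | h in H_all].

End L2D.

(* Main.v *)
Require Import Defs.
From HB Require Import structures.
From mathcomp Require Import all_boot all_order all_algebra.
From mathcomp Require Import all_classical all_reals all_analysis.
From mathcomp Require Import measurable_realfun.
From mathcomp Require Import ring lra zify.
Import Order.TTheory GRing.Theory Num.Theory.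
Local Open Scope ring_scope.
Local Open Scope classical_set_scope.


Section Tool.
Context {d : measure_display} {T : measurableType d} {R : realType}
  (P : probability T R).

Definition bm (f : T -> R) :=
  measurable_fun setT f /\ exists M : R, forall z, `|f z| <= M.

Lemma bm_int {f} : bm f -> P.-integrable setT (EFin \o f).
Proof.
move=> [mf [M hM]]; apply: measurable_bounded_integrable => //.
  by apply: le_lt_trans (probability_le1 P measurableT) _; rewrite ltry.
exists M; split; first by rewrite num_real.
by move=> y My x _; apply: le_trans (hM x) (ltW My).
Qed.

Definition E (f : T -> R) : R := (\int[P]_z f z)%R.

Lemma E_EFin f : bm f -> (\int[P]_z (f z)%:E)%E = (E f)%:E.
Proof.
move=> bf; rewrite /E /Rintegral fineK //.
by apply: integrable_fin_num => //; exact: bm_int.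
Qed.

Lemma bm_cst (a : R) : bm (fun _ => a).
Proof. by split; [exact: measurable_cst | exists `|a| => z]. Qed.

Lemma bmD {f g} : bm f -> bm g -> bm (fun z => f z + g z).
Proof.
move=> [mf [M1 h1]] [mg [M2 h2]]; split; first exact: measurable_funD.
exists (M1 + M2) => z; apply: le_trans (ler_normD _ _) _; exact: lerD.
Qed.

Lemma bmM {f g} : bm f -> bm g -> bm (fun z => f z * g z).
Proof.
move=> [mf [M1 h1]] [mg [M2 h2]]; split; first exact: measurable_funM.
exists (M1 * M2) => z; rewrite normrM; apply: ler_pM => //.
Qed.

Lemma bmN {f} : bm f -> bm (fun z => - f z).
Proof.
move=> bf; have := bmM (bm_cst (-1)) bf.
by under eq_fun do rewrite mulN1r.
Qed.

Lemma bm_sum (I : eqType) (r : seq I) (F : I -> T -> R) :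
  (forall i, bm (F i)) -> bm (fun z => \sum_(i <- r) F i z).
Proof.
move=> bF; elim: r => [|i r IH].
  by under eq_fun do rewrite big_nil; exact: bm_cst.
by under eq_fun do rewrite big_cons; exact: bmD.
Qed.

Lemma ED f g : bm f -> bm g -> E (fun z => f z + g z) = E f + E g.
Proof. by move=> bf bg; rewrite /E RintegralD //; exact: bm_int. Qed.

Lemma EZ (a : R) f : bm f -> E (fun z => a * f z) = a * E f.
Proof. by move=> bf; rewrite /E RintegralZl //; exact: bm_int. Qed.

Lemma Ecst (a : R) : E (fun _ => a) = a.
Proof.
rewrite /E Rintegral_cst // (_ : fine _ = 1) ?mulr1 //.
exact: (congr1 fine (probability_setT P)).
Qed.

Lemma Ele f g : bm f -> bm g -> (forall z, f z <= g z) -> E f <= E g.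
Proof. by move=> bf bg fg; apply: le_Rintegral => //; exact: bm_int. Qed.

Lemma Esum (I : eqType) (r : seq I) (F : I -> T -> R) :
  (forall i, bm (F i)) -> E (fun z => \sum_(i <- r) F i z) = \sum_(i <- r) E (F i).
Proof.
move=> bF; elim: r => [|i r IH].
  by under eq_fun do rewrite big_nil; rewrite big_nil Ecst.
under eq_fun do rewrite big_cons.
by rewrite big_cons ED // ?IH //; exact: bm_sum.
Qed.

Lemma Eext f g : (forall z, f z = g z) -> E f = E g.
Proof. by move=> fg; congr E; apply: funext. Qed.

End Tool.


Section Mix.
Context {d1 d2 : measure_display} {X : measurableType d1} {Y : measurableType d2}
  {R : realType} (P : probability (X * Y)%type R).

Lemma bm_fst (F : X -> R) : measurable_fun setT F ->
  (exists M, forall x, `|F x| <= M) -> bm (fun z : X * Y => F z.1).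
Proof.
move=> mF [M hM]; split; last by exists M => z.
exact: (measurableT_comp mF measurable_fst).
Qed.

Lemma bm_if (b : X -> bool) (f1 f2 : X * Y -> R) : measurable_fun setT b -> bm f1 -> bm f2 ->
  bm (fun z : X * Y => if b z.1 then f1 z else f2 z).
Proof.
move=> mb [m1 [M1 h1]] [m2 [M2 h2]]; split.
  apply: measurable_fun_ifT => //.
  exact: (measurableT_comp mb measurable_fst).
exists (Num.max M1 M2) => z; case: (b z.1); rewrite le_max ?h1 ?h2 ?orbT //.
Qed.

Lemma count_trunc (N : nat) (a : R) : 0 <= a ->
  \sum_(i < N) (((i.+1)%:R <= a)%R)%:R = (minn (Num.truncn a) N)%:R :> R.
Proof.
move=> a0.
have -> : \sum_(i < N) (((i.+1)%:R <= a)%R)%:R = \sum_(i < N) ((i < Num.truncn a)%N)%:R :> R.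
  by apply: eq_bigr => i _; rewrite truncn_gt_nat.
elim: N => [|N IH]; first by rewrite big_ord0 minn0.
rewrite big_ord_recr /= IH -natrD; congr (_%:R).
rewrite /minn; case: ltnP => h; repeat case: ifP => ?; lia.
Qed.


Lemma mix2 (w : X -> R) (f1 f2 : X * Y -> R) (eps : R) :
  measurable_fun setT w -> (forall x, 0 <= w x <= 1) -> bm f1 -> bm f2 ->
  (forall z, 0 <= f1 z <= 1) -> (forall z, 0 <= f2 z <= 1) -> 0 < eps ->
  exists b : X -> bool, measurable_fun setT b /\
   E P (fun z => if b z.1 then f1 z else f2 z) <=
   E P (fun z => w z.1 * f1 z + (1 - w z.1) * f2 z) + eps.
Proof.
move=> mw w01 bf1 bf2 f01 f02 e0.
pose k := Num.truncn eps^-1.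
have N0 : (0 < k.+1%:R :> R) by rewrite ltr0n.
have Ne : 1 <= eps * k.+1%:R.
  have h := truncnS_gt eps^-1.
  have h2 : eps * eps^-1 = 1 by rewrite mulfV // gt_eqF.
  nra.
pose b (i : 'I_k.+1) (x : X) := ((i.+1)%:R <= k.+1%:R * w x)%R.
have mb : forall i, measurable_fun setT (b i).
  move=> i; apply: measurable_fun_ler; first exact: measurable_cst.
  exact: measurable_funM (measurable_cst _) mw.
pose sel (i : 'I_k.+1) (z : X * Y) := if b i z.1 then f1 z else f2 z.
have bsel : forall i, bm (sel i) by move=> i; exact: bm_if.
have [i0 _ Hmin] := @arg_minP _ _ _ (ord0 : 'I_k.+1) xpredT (fun i => E P (sel i)) isT.
exists (b i0); split; first exact: mb.
have bw : bm (fun z : X * Y => w z.1).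
  apply: bm_fst => //; exists 1 => x; have /andP[? ?] := w01 x.
  by rewrite ger0_norm.
have bR : bm (fun z => w z.1 * f1 z + (1 - w z.1) * f2 z).
  by apply: bmD; apply: bmM => //; apply: bmD => //; [exact: bm_cst | exact: bmN].
have step1 : E P (sel i0) <= k.+1%:R^-1 * \sum_(i < k.+1) E P (sel i).
  rewrite -(ler_pM2l N0) mulrA mulfV ?gt_eqF // mul1r.
  rewrite (_ : k.+1%:R * _ = \sum_(i < k.+1) E P (sel i0)); last first.
    by rewrite sumr_const card_ord mulr_natl.
  by apply: ler_sum => i _; exact: Hmin.
apply: (le_trans step1).
rewrite -Esum // -EZ; last exact: bm_sum.
rewrite -[X in _ <= _ + X](Ecst P) -ED //; last exact: bm_cst.
apply: Ele.
- apply: bmM; [exact: bm_cst|exact: bm_sum].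
- by apply: bmD => //; exact: bm_cst.
move=> z.
have selE : forall i, sel i z = (b i z.1)%:R * f1 z + (1 - (b i z.1)%:R) * f2 z.
  move=> i; rewrite /sel; case: (b i z.1) => /=; rewrite ?mulr1n ?mulr0n; ring.
rewrite (eq_bigr _ (fun i _ => selE i)) big_split /= -!mulr_suml sumrB sumr_const card_ord.
have /andP[w0 w1] := w01 z.1.
have Nw0 : 0 <= k.+1%:R * w z.1 by apply: mulr_ge0 => //; exact: ltW.
have -> : \sum_(i < k.+1) (b i z.1)%:R = (Num.truncn (k.+1%:R * w z.1))%:R :> R.
  rewrite /b count_trunc // (_ : minn _ _ = Num.truncn (k.+1%:R * w z.1)) //.
  apply/minn_idPl; rewrite truncn_le_nat.
  by apply: (le_lt_trans (y := k.+1%:R)); [rewrite ler_piMr // | rewrite ltr_nat].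
have /andP[t1 t2] := truncn_itv Nw0.
have t3 : k.+1%:R * w z.1 < (Num.truncn (k.+1%:R * w z.1))%:R + 1 by rewrite natr1.
clear t2.
set m := (Num.truncn _)%:R in t1 t3 *.
have /andP[a1 a2] := f01 z.
have /andP[c1 c2] := f02 z.
rewrite -(ler_pM2l N0) mulrA mulfV ?gt_eqF // mul1r.

nra.
Qed.

End Mix.


Lemma meas_ord {m} {d' : measure_display} {T' : measurableType d'}
  (f : 'I_m.+1 -> T') : measurable_fun setT f.
Proof. by move=> _ B _. Qed.

Lemma le_sum_nonneg (R : realType) (I : finType) (F : I -> R) j :
  (forall i, 0 <= F i) -> F j <= \sum_i F i.
Proof.
by move=> F0; rewrite (bigD1 j) //= lerDl; apply: sumr_ge0 => i _.
Qed.

Section Derand.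
Context {d1 d2 : measure_display} {X : measurableType d1} {Y : measurableType d2}
  {R : realType} (P : probability (X * Y)%type R).

Lemma derand (K : nat) : forall (l : 'I_K.+1 -> X * Y -> R) (r : 'I_K.+1 -> X -> R) (eps : R),
  (forall j, bm (l j)) -> (forall j z, 0 <= l j z <= 1) ->
  (forall j, measurable_fun setT (r j)) -> (forall j x, 0 <= r j x) ->
  (forall x, \sum_j r j x = 1) -> 0 < eps ->
  exists g : X -> 'I_K.+1, measurable_fun setT g /\
    E P (fun z => l (g z.1) z) <= E P (fun z => \sum_j r j z.1 * l j z) + eps.
Proof.
elim: K => [|K IH] l r eps bl l01 mr r0 r1 e0.
  exists (fun _ => ord0); split; first exact: measurable_cst.
  have -> : E P (fun z => l ord0 z) = E P (fun z => \sum_j r j z.1 * l j z).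
    apply: Eext => z; rewrite big_ord1 (_ : r ord0 z.1 = 1) ?mul1r //.
    by rewrite -(r1 z.1) big_ord1.
  by rewrite lerDl ltW.
pose wd := widen_ord (leqnSn K.+1).
pose w x := \sum_(j < K.+1) r (wd j) x.
have mw : measurable_fun setT w by apply: measurable_sum => j; exact: mr.
have wE : forall x, w x = 1 - r ord_max x.
  by move=> x; rewrite -(r1 x) big_ord_recr /= addrK.
have w01 : forall x, 0 <= w x <= 1.
  move=> x; apply/andP; split; first by apply: sumr_ge0 => j _; exact: r0.
  by rewrite wE lerBlDr lerDl r0.
pose iv x := expR ((-1) * ln (w x)).
have ivE : forall x, 0 < w x -> iv x = (w x)^-1.
  by move=> x wx; rewrite /iv mulN1r expRN lnK // posrE.
have miv : measurable_fun setT iv.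
  have h := (measurableT_comp (@measurable_expR R)
    (measurable_funM (measurable_cst (-1 : R)) (measurableT_comp (@measurable_ln R) mw))).
  exact: h.
pose r' (j : 'I_K.+1) x := if 0 < w x then r (wd j) x * iv x else (j == ord0)%:R.
have mr' : forall j, measurable_fun setT (r' j).
  move=> j; apply: measurable_fun_ifT.
  - exact: measurable_fun_ltr (measurable_cst _) mw.
  - exact: measurable_funM (mr _) miv.
  - exact: measurable_cst.
have r'0 : forall j x, 0 <= r' j x.
  move=> j x; rewrite /r'; case: ifP => _; last exact: ler0n.
  by rewrite mulr_ge0 // ?r0 // expR_ge0.
have r'1 : forall x, \sum_j r' j x = 1.
  move=> x; have [wx|wx] := boolP (0 < w x).
    rewrite (eq_bigr (fun j => r (wd j) x * iv x)); last by move=> j _; rewrite /r' ifT.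
    by rewrite -mulr_suml ivE // mulfV // gt_eqF.
  rewrite (eq_bigr (fun j : 'I_K.+1 => (j == ord0)%:R)); last by move=> j _; rewrite /r' ifF // (negbTE wx).
  rewrite (bigD1 ord0) //= big1 ?addr0 // => i /negbTE ->; exact: mulr0n.
have r'le1 : forall j x, `|r' j x| <= 1.
  by move=> j x; rewrite ger0_norm // -(r'1 x); apply: le_sum_nonneg => i; exact: r'0.
pose f1 z := \sum_j r' j z.1 * l (wd j) z.
have bf1 : bm f1.
  apply: bm_sum => j; apply: bmM; last exact: bl.
  by apply: bm_fst => //; exists 1.
have f01 : forall z, 0 <= f1 z <= 1.
  move=> z; apply/andP; split.
    apply: sumr_ge0 => j _; apply: mulr_ge0 => //.
    by have /andP[] := l01 (wd j) z.
  rewrite -(r'1 z.1); apply: ler_sum => j _; apply: ler_piMr => //.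
  by have /andP[] := l01 (wd j) z.
have e2 : 0 < eps / 2 by rewrite divr_gt0.
have [b [mb Hb]] := mix2 P w f1 (l ord_max) (eps / 2) mw w01 bf1 (bl ord_max) f01 (l01 ord_max) e2.
pose l' (j : 'I_K.+1) z := if b z.1 then l (wd j) z else l ord_max z.
have bl' : forall j, bm (l' j) by move=> j; apply: bm_if.
have l'01 : forall j z, 0 <= l' j z <= 1 by move=> j z; rewrite /l'; case: ifP.
have [g' [mg' Hg']] := IH l' r' (eps / 2) bl' l'01 mr' r'0 r'1 e2.
exists (fun x => if b x then wd (g' x) else ord_max); split.
  apply: measurable_fun_ifT.
  - exact: mb.
  - exact: measurableT_comp (meas_ord wd) mg'.
  - exact: measurable_cst.
have -> : E P (fun z => l (if b z.1 then wd (g' z.1) else ord_max) z) =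
          E P (fun z => l' (g' z.1) z).
  by apply: Eext => z; rewrite /l'; case: (b z.1).
apply: (le_trans Hg').
have -> : E P (fun z => \sum_j r' j z.1 * l' j z) =
          E P (fun z => if b z.1 then f1 z else l ord_max z).
  apply: Eext => z; rewrite /l' /f1; case: (b z.1) => //.
  by rewrite -mulr_suml r'1 mul1r.
apply: le_trans (lerD Hb (lexx _)) _.
have -> : E P (fun z => w z.1 * f1 z + (1 - w z.1) * l ord_max z) =
          E P (fun z => \sum_j r j z.1 * l j z).
  apply: Eext => z; rewrite big_ord_recr /=.
  have -> : 1 - w z.1 = r ord_max z.1 by rewrite wE opprB addrC subrK.
  congr (_ + _).
  rewrite /f1 mulr_sumr; apply: eq_bigr => j _; rewrite /r'.
  case: ifP => wx.
    rewrite ivE //; field; exact: lt0r_neq0.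
  have w0 : w z.1 = 0.
    by apply/eqP; rewrite eq_le (andP (w01 z.1)).1 andbT leNgt wx.
  have hs : \sum_(j < K.+1) r (wd j) z.1 == 0 by rewrite -/(w z.1) w0.
  have h0 := psumr_eq0P (fun i _ => r0 (wd i) z.1) (eqP hs).
  by rewrite w0 h0 ?mul0r.
lra.
Qed.
End Derand.


Lemma argmax_cmp (R : realType) m (F G : 'I_m.+1 -> R) :
  (forall i k, (F i <= F k) = (G i <= G k)) ->
  [arg max_(i > ord0) F i]%O = [arg max_(i > ord0) G i]%O.
Proof.
move=> FG; rewrite /Order.arg_max /extremum; congr odflt; apply: eq_pick => i /=.
by apply: eq_forallb => j; rewrite FG.
Qed.

Lemma hpred_meas {d} {X : measurableType d} {R : realType} n (h : X -> 'I_n.+2 -> R) :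
  (forall j, measurable_fun setT (fun x => h x j)) -> measurable_fun setT (hpred h).
Proof.
move=> mh _ A _; rewrite setTI.
pose Mx x : {ffun 'I_n.+2 * 'I_n.+2 -> bool} := [ffun p => h x p.1 <= h x p.2].
pose S Mat := \bigcap_(p in [set: 'I_n.+2 * 'I_n.+2]) [set x | (h x p.1 <= h x p.2) = Mat p].
have mS : forall Mat, measurable (S Mat).
  move=> Mat; apply: fin_bigcap_measurable; first exact: finite_finset.
  move=> p _.
  have mf : measurable_fun setT (fun x => h x p.1 <= h x p.2).
    exact: measurable_fun_ler.
  have -> : [set x | (h x p.1 <= h x p.2) = Mat p] =
    setT `&` (fun x => h x p.1 <= h x p.2) @^-1` [set Mat p].
    by apply/seteqP; split => x /=; [move=> ->|move=> [_ ->]].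
  by apply: mf => //.
pose Good := [set Mat | exists x, Mx x = Mat /\ A (hpred h x)].
have -> : hpred h @^-1` A = \bigcup_(Mat in Good) S Mat.
  apply/seteqP; split => x /=.
    move=> Ax; exists (Mx x); first by exists x.
    by move=> p _ /=; rewrite ffunE.
  move=> [Mat [x' [<- Ax']] Sx].
  suff -> : hpred h x = hpred h x' by [].
  apply: argmax_cmp => i k.
  by have := Sx (i, k) I; rewrite /= ffunE.
by apply: fin_bigcup_measurable; [exact: finite_finset | move=> Mat _; exact: mS].
Qed.


Lemma sum_delta (R : realType) (I : finType) (F : I -> R) (a : I) :
  \sum_j F j * (j == a)%:R = F a.
Proof.
rewrite (bigD1 a) //= eqxx mulr1 big1 ?addr0 // => j /negbTE ->; exact: mulr0.
Qed.

Section Main.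
Context {d : measure_display} {X : measurableType d} {R : realType} (n : nat)
  (c : X -> 'I_n.+1 -> R)
  (c_meas : measurable_fun setT (fun z : X * 'I_n.+1 => c z.1 z.2))
  (c01 : forall x y, 0 <= c x y <= 1)
  (P : probability (X * 'I_n.+1)%type R).

Definition lj (j : 'I_n.+2) (z : X * 'I_n.+1) : R :=
  (j != lab z.2)%:R * (j != defer n)%:R + c z.1 z.2 * (j == defer n)%:R.

Lemma lj01 j z : 0 <= lj j z <= 1.
Proof.
rewrite /lj; have /andP[c0 c1] := c01 z.1 z.2.
by case: (j == defer n); case: (j != lab z.2) => /=; apply/andP; split; lra.
Qed.

Lemma mlj j : measurable_fun setT (lj j).
Proof.
rewrite /lj; apply: measurable_funD; apply: measurable_funM.
- exact: (measurableT_comp (meas_ord (fun y : 'I_n.+1 => (j != lab y)%:R : R)) measurable_snd).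
- exact: measurable_cst.
- exact: c_meas.
- exact: measurable_cst.
Qed.

Lemma blj j : bm (lj j).
Proof.
split; first exact: mlj.
by exists 1 => z; have /andP[h0 h1] := lj01 j z; rewrite ger0_norm.
Qed.


Lemma bm_comp_g (g : X -> 'I_n.+2) : measurable_fun setT g ->
  bm (fun z : X * 'I_n.+1 => lj (g z.1) z).
Proof.
move=> mg.
have -> : (fun z : X * 'I_n.+1 => lj (g z.1) z) =
          (fun z => \sum_j lj j z * (j == g z.1)%:R).
  by apply: funext => z; rewrite sum_delta.
apply: bm_sum => j; apply: bmM; first exact: blj.
apply: (bm_fst (fun x => (j == g x)%:R : R)); last by exists 1 => x; case: (j == g x); rewrite ?normr1 ?normr0.
exact: (measurableT_comp (meas_ord (fun i => (j == i)%:R : R)) mg).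
Qed.

Lemma Hmeas (h : X -> 'I_n.+2 -> R) : H_all h -> forall j, measurable_fun setT (fun x => h x j).
Proof. by move=> Hh j; exact: (measurable_fun_pair1 j Hh). Qed.

Lemma risk_def (h : X -> 'I_n.+2 -> R) : H_all h ->
  risk P (L_def c) h = (E P (fun z => lj (hpred h z.1) z))%:E.
Proof.
move=> Hh; rewrite /risk -E_EFin //.
by apply: bm_comp_g; apply: hpred_meas; exact: Hmeas.
Qed.

Definition Zs (h : X -> 'I_n.+2 -> R) x := \sum_k expR (h x k).
Definition ps (h : X -> 'I_n.+2 -> R) j x := expR (h x j) / Zs h x.

Lemma Zs_gt0 h x : 0 < Zs h x.
Proof.
apply: (lt_le_trans (expR_gt0 (h x ord0))).
rewrite /Zs; apply: (le_sum_nonneg _ _ (fun k => expR (h x k))) => k; exact: expR_ge0.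
Qed.

Lemma ps_ge0 h j x : 0 <= ps h j x.
Proof. by rewrite /ps divr_ge0 // ?expR_ge0 // ltW // Zs_gt0. Qed.

Lemma ps_sum h x : \sum_j ps h j x = 1.
Proof. by rewrite /ps -mulr_suml mulfV // gt_eqF // Zs_gt0. Qed.

Lemma mps h : H_all h -> forall j, measurable_fun setT (ps h j).
Proof.
move=> Hh j.
have -> : ps h j = (fun x => expR (h x j + (-1) * ln (Zs h x))).
  apply: funext => x; rewrite /ps expRD mulN1r expRN lnK //.
  by rewrite posrE Zs_gt0.
have mZ : measurable_fun setT (Zs h).
  by apply: measurable_sum => k; exact: (measurableT_comp (@measurable_expR R) (Hmeas h Hh k)).
have := (measurableT_comp (@measurable_expR R) (measurable_funD (Hmeas h Hh j)
    (measurable_funM (measurable_cst (-1 : R)) (measurableT_comp (@measurable_ln R) mZ)))).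
by [].
Qed.

Lemma lab_neq_defer (y : 'I_n.+1) : lab y != defer n.
Proof. by apply/eqP => /(congr1 val) /= h; have := ltn_ord y; rewrite h ltnn. Qed.

Lemma L_RL2D_E h x y :
  L_RL2D (fun t => 1 - t) c h x y = \sum_j ps h j x * lj j (x, y).
Proof.
have ljE : forall j, lj j (x, y) =
    1 - (j == lab y)%:R - (j == defer n)%:R + c x y * (j == defer n)%:R.
  move=> j; rewrite /lj /=.
  have nab := lab_neq_defer y.
  case E1: (j == lab y); case E2: (j == defer n) => /=; try lra.
  by move: nab; rewrite -(eqP E1) E2.
rewrite (eq_bigr (fun j => ps h j x - ps h j x * (j == lab y)%:R -
   ps h j x * (j == defer n)%:R + c x y * (ps h j x * (j == defer n)%:R))); last first.
  by move=> j _; rewrite ljE; ring.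
rewrite big_split /= !sumrB -mulr_sumr !sum_delta ps_sum /L_RL2D /ps /Zs.
ring.
Qed.


Lemma bps h : H_all h -> forall j, bm (fun z : X * 'I_n.+1 => ps h j z.1).
Proof.
move=> Hh j; apply: (bm_fst (ps h j)); first exact: mps.
exists 1 => x; rewrite ger0_norm ?ps_ge0 // -(ps_sum h x).
by apply: (le_sum_nonneg _ _ (fun k => ps h k x)) => k; exact: ps_ge0.
Qed.

Lemma bRL h : H_all h -> bm (fun z : X * 'I_n.+1 => \sum_j ps h j z.1 * lj j z).
Proof. by move=> Hh; apply: bm_sum => j; apply: bmM; [exact: bps|exact: blj]. Qed.

Lemma risk_RL (h : X -> 'I_n.+2 -> R) : H_all h ->
  risk P (L_RL2D (fun t => 1 - t) c) h =
  (E P (fun z => \sum_j ps h j z.1 * lj j z))%:E.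
Proof.
move=> Hh; rewrite /risk -E_EFin; last exact: bRL.
congr (integral _ _ _); apply: funext => -[x y] /=.
by rewrite L_RL2D_E.
Qed.

Definition hg (g : X -> 'I_n.+2) : X -> 'I_n.+2 -> R := fun x j => (j == g x)%:R.

Lemma hg_Hall (g : X -> 'I_n.+2) : measurable_fun setT g -> H_all (hg g).
Proof.
move=> mg; rewrite /H_all /hg /=.
have -> : (fun z : X * 'I_n.+2 => (z.2 == g z.1)%:R : R) =
   (fun z => \sum_i (i == g z.1)%:R * (i == z.2)%:R).
  by apply: funext => z; rewrite sum_delta.
apply: measurable_sum => i; apply: measurable_funM.
- exact: (measurableT_comp (meas_ord (fun k => (i == k)%:R : R))
          (measurableT_comp mg measurable_fst)).
- exact: (measurableT_comp (meas_ord (fun k => (i == k)%:R : R)) measurable_snd).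
Qed.

Lemma hpred_hg g x : hpred (hg g) x = g x.
Proof.
rewrite /hpred /hg; case: arg_maxP => //= i _ Hi.
have := Hi (g x) isT; rewrite eqxx.
by case: eqP => // _; rewrite ler10.
Qed.

Lemma D_le_mix (r : 'I_n.+2 -> X -> R) :
  (forall j, measurable_fun setT (r j)) -> (forall j x, 0 <= r j x) ->
  (forall x, \sum_j r j x = 1) ->
  (best_risk P (L_def c) <= (E P (fun z => \sum_j r j z.1 * lj j z))%:E)%E.
Proof.
move=> mr r0 r1; apply/lee_addgt0Pr => eps e0.
have [g [mg Hg]] := derand P n.+1 lj r eps blj lj01 mr r0 r1 e0.
apply: le_trans (ereal_inf_lbound _) _.
  by exists (hg g); first exact: hg_Hall.
rewrite risk_def; last exact: hg_Hall.
rewrite -EFinD lee_fin; apply: le_trans Hg.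
by rewrite (Eext P _ (fun z => lj (g z.1) z)) // => z; rewrite hpred_hg.
Qed.


Lemma Rr_le_def h : H_all h ->
  (best_risk P (L_RL2D (fun t : R => (1 - t)%R) c) <= risk P (L_def c) h)%E.
Proof.
move=> Hh; rewrite risk_def //; apply/lee_addgt0Pr => eps e0.
set g := hpred h.
have mg : measurable_fun setT g by apply: hpred_meas; exact: Hmeas.
pose N : R := n.+1%:R.
have N0 : 0 < N by rewrite ltr0n.
pose M := N / eps + 1.
have hq : 0 <= N / eps by rewrite divr_ge0 // ltW.
have M0 : 0 < M by rewrite /M; lra.
have eM : eps * M = N + eps.
  by rewrite /M mulrDr mulr1 [eps * (_ / _)]mulrC divfK // gt_eqF.
pose hM x j := hg g x j * ln M.
have HM : H_all hM.
  have h1 := measurable_funM (hg_Hall _ mg) (measurable_cst (ln M)); by [].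
apply: le_trans (ereal_inf_lbound _) _; first by exists hM.
rewrite risk_RL // -EFinD lee_fin.
rewrite -[X in _ <= _ + X](Ecst P) -ED //; [|exact: bm_comp_g|exact: bm_cst].
apply: Ele; [exact: bRL | by apply: bmD; [exact: bm_comp_g|exact: bm_cst] | ].
move=> [x y] /=.
have eM' : forall j, expR (hM x j) = if j == g x then M else 1.
  move=> j; rewrite /hM /hg; case: eqP => _; rewrite ?mul1r ?mul0r ?expR0 //.
  by rewrite lnK // posrE.
have ZE : Zs hM x = M + N.
  rewrite /Zs (bigD1 (g x)) //= eM' eqxx; congr (_ + _).
  rewrite (eq_bigr (fun _ => 1)); last by move=> j /negbTE jg; rewrite eM' jg.
  have : \sum_(j < n.+2) (1 : R) = n.+2%:R by rewrite sumr_const card_ord.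
  rewrite (bigD1 (g x)) //= -natr1 => e; rewrite /N; lra.
have ps_g : ps hM (g x) x = M / (M + N) by rewrite /ps eM' eqxx ZE.
have restE : \sum_(j | j != g x) ps hM j x = 1 - ps hM (g x) x.
  by have := ps_sum hM x; rewrite (bigD1 (g x)) //= => e; lra.
have rest : \sum_(j | j != g x) ps hM j x * lj j (x, y) <= \sum_(j | j != g x) ps hM j x.
  apply: ler_sum => j _; apply: ler_piMr; first exact: ps_ge0.
  by have /andP[] := lj01 j (x, y).
have Q0 : 0 < M + N by lra.
have bnd : 1 - ps hM (g x) x <= eps.
  rewrite ps_g (_ : 1 - M / (M + N) = N / (M + N)); last by field; lra.
  rewrite ler_pdivrMr // mulrDr eM.
  have : 0 <= eps * N by rewrite mulr_ge0 // ltW.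
  lra.
have psg1 : ps hM (g x) x <= 1.
  rewrite -(ps_sum hM x); exact: (le_sum_nonneg _ _ (fun k => ps hM k x) (g x) (fun k => ps_ge0 hM k x)).
have /andP[l0 l1] := lj01 (g x) (x, y).
have psg0 := ps_ge0 hM (g x) x.
rewrite (bigD1 (g x)) //=.
have : ps hM (g x) x * lj (g x) (x, y) <= lj (g x) (x, y) by rewrite ler_piMl.
lra.
Qed.


Lemma Rr_le_D :
  (best_risk P (L_RL2D (fun t : R => (1 - t)%R) c) <= best_risk P (L_def c))%E.
Proof. by apply: le_ereal_inf_tmp => _ [h Hh <-]; exact: Rr_le_def. Qed.

Lemma Rr_ge0 : (0 <= best_risk P (L_RL2D (fun t : R => (1 - t)%R) c))%E.
Proof.
apply: le_ereal_inf_tmp => _ [h Hh <-]; rewrite risk_RL // lee_fin.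
apply: Rintegral_ge0 => z _; apply: sumr_ge0 => j _; apply: mulr_ge0.
  exact: ps_ge0.
by have /andP[] := lj01 j z.
Qed.

Lemma D_fin : best_risk P (L_def c) \is a fin_num.
Proof.
have H0 : H_all (hg (fun _ => ord0)) by apply: hg_Hall; exact: measurable_cst.
rewrite ge0_fin_numE; last exact: le_trans Rr_ge0 Rr_le_D.
apply: le_lt_trans (ereal_inf_lbound _) _; first by exists (hg (fun _ => ord0)).
by rewrite risk_def // ltry.
Qed.

Lemma Rr_fin : best_risk P (L_RL2D (fun t : R => (1 - t)%R) c) \is a fin_num.
Proof.
rewrite ge0_fin_numE; last exact: Rr_ge0.
apply: le_lt_trans Rr_le_D _; rewrite ltey.
by move: D_fin; rewrite fin_numE => /andP[].
Qed.

Lemma E_lin2 (a b : R) (f g : X * 'I_n.+1 -> R) : bm f -> bm g ->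
  E P (fun z => a * f z + b * g z) = a * E P f + b * E P g.
Proof.
move=> bf bg; rewrite ED; [|exact: bmM (bm_cst _) bf|exact: bmM (bm_cst _) bg].
by rewrite !EZ.
Qed.

Lemma main_ineq h : H_all h ->
  (risk P (L_def c) h - best_risk P (L_def c) <=
   (n.+2)%:R%:E * (risk P (L_RL2D (fun t : R => (1 - t)%R) c) h -
                   best_risk P (L_RL2D (fun t : R => (1 - t)%R) c)))%E.
Proof.
move=> Hh.
have D_le : (best_risk P (L_def c) <= risk P (L_def c) h)%E.
  by apply: ereal_inf_lbound; exists h.
rewrite risk_def // risk_RL // in D_le *.
set eD := E P _ in D_le *; set eR := E P _.
rewrite -(fineK D_fin) -(fineK Rr_fin) in D_le *.
have RD := Rr_le_D; rewrite -(fineK D_fin) -(fineK Rr_fin) lee_fin in RD.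
set dD := fine _ in D_le RD *; set rR := fine _ in RD *.
pose k := hpred h.
have mk : measurable_fun setT k by apply: hpred_meas; exact: Hmeas.
pose N1 : R := n.+1%:R.
have N10 : 0 < N1 by rewrite ltr0n.
pose r j x := ((n.+2)%:R * ps h j x - (j == k x)%:R) / N1.
have mr : forall j, measurable_fun setT (r j).
  move=> j; apply: measurable_funM; last exact: measurable_cst.
  apply: measurable_funB; first exact: measurable_funM (measurable_cst _) (mps h Hh j).
  exact: (measurableT_comp (meas_ord (fun i => (j == i)%:R : R)) mk).
have hk : forall x j, h x j <= h x (k x).
  by move=> x j; rewrite /k /hpred; case: arg_maxP => //= i _ Hi; exact: Hi.
have psk : forall x, 1 <= (n.+2)%:R * ps h (k x) x.
  move=> x; rewrite -[X in X <= _](ps_sum h x).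
  have -> : (n.+2)%:R * ps h (k x) x = \sum_(j < n.+2) ps h (k x) x.
    by rewrite sumr_const card_ord mulr_natl.
  apply: ler_sum => j _; rewrite /ps; apply: ler_wpM2r.
    by rewrite invr_ge0 ltW // Zs_gt0.
  by rewrite ler_expR.
have r0 : forall j x, 0 <= r j x.
  move=> j x; rewrite /r; apply: divr_ge0; last exact: ltW.
  case: eqP => [->|_]; first by rewrite subr_ge0.
  by rewrite subr0 mulr_ge0 // ps_ge0.
have r1 : forall x, \sum_j r j x = 1.
  move=> x; rewrite /r -mulr_suml sumrB -mulr_sumr ps_sum.
  rewrite (eq_bigr (fun j => 1 * (j == k x)%:R)); last by move=> j _; rewrite mul1r.
  rewrite sum_delta mulr1 -[(n.+2)%:R]natr1 addrK mulfV //.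
have mix := D_le_mix r mr r0 r1.
have Emix : E P (fun z => \sum_j r j z.1 * lj j z) = N1^-1 * (n.+2)%:R * eR + (- N1^-1) * eD.
  rewrite -E_lin2; [|exact: bRL|exact: bm_comp_g].
  apply: Eext => z.
  rewrite (eq_bigr (fun j => N1^-1 * (n.+2)%:R * (ps h j z.1 * lj j z) +
      (- N1^-1) * (lj j z * (j == k z.1)%:R))); last by move=> j _; rewrite /r; ring.
  by rewrite big_split /= -!mulr_sumr sum_delta.
rewrite -(fineK D_fin) Emix lee_fin -/dD in mix.
rewrite -!EFinB -EFinM lee_fin.
have e2 : (n.+2)%:R = N1 + 1 :> R by rewrite /N1 natr1.
rewrite e2 in mix *.
have mix' : dD * N1 <= (N1 + 1) * eR - eD.
  have eq1 : (N1^-1 * (N1 + 1) * eR + - N1^-1 * eD) * N1 = (N1 + 1) * eR - eD.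
    by field; rewrite gt_eqF.
  by rewrite -eq1 ler_pM2r.
nra.
Qed.

End Main.


Theorem corollary5 (d : measure_display) (X : measurableType d)
  (R : realType) (n : nat) (c : X -> 'I_n.+1 -> R)
  (c_meas : measurable_fun setT (fun z : X * 'I_n.+1 => c z.1 z.2))
  (c01 : forall x y, 0 <= c x y <= 1)
  (P : probability (X * 'I_n.+1)%type R) :
  let Psi := fun t : R => 1 - t in
  (forall h : X -> 'I_n.+2 -> R, H_all h ->
    (risk P (L_def c) h - best_risk P (L_def c) <=
       (n.+2)%:R%:E * (risk P (L_RL2D Psi c) h - best_risk P (L_RL2D Psi c)))%E)
  /\
  (forall hs : nat -> X -> 'I_n.+2 -> R, (forall k, H_all (hs k)) ->
    (fun k => (risk P (L_RL2D Psi c) (hs k) - best_risk P (L_RL2D Psi c))%E)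
      @ \oo --> 0%E ->
    (fun k => (risk P (L_def c) (hs k) - best_risk P (L_def c))%E)
      @ \oo --> 0%E).
Proof.
move=> Psi; split.
  by move=> h Hh; exact: (main_ineq n c c_meas c01 P h Hh).
move=> hs Hhs Hcv.
apply: (@squeeze_cvge _ _ _ _ (fun _ => 0%E) _
  (fun k => (n.+2)%:R%:E * (risk P (L_RL2D Psi c) (hs k) - best_risk P (L_RL2D Psi c)))%E).
- apply: nearW => k; apply/andP; split; last exact: (main_ineq n c c_meas c01 P (hs k) (Hhs k)).
  rewrite subre_ge0; first by apply: ereal_inf_lbound; exists (hs k).
  by rewrite (risk_def n c c_meas c01 P (hs k) (Hhs k)).
- exact: cvg_cst.
- rewrite -(mule0 (n.+2)%:R%:E).
  apply: cvgeM => //; exact: cvg_cst.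
Qed.
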